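(* Let $\mathrm P$ be a probability measure on $\mathbb{R}^d$ having a Lebesgue density, and let $\varphi$ be as in the context. For every $\mathbf u\in\mathbb S_{d-1}$, every sequence of reals $t_n\to\infty$, and every choice $\mathbf y_n\in\partial\varphi(t_n\mathbf u)$, we have $\lim_{n\to\infty}\mathbf y_n=\mathbf u$.
   Context: $\mathbb{B}_d$ is the open unit ball of $\mathbb{R}^d$ and $\mathbb S_{d-1}$ the unit sphere. $\mathrm U_d$ is the spherical uniform distribution on $\mathbb B_d$ (density $u_d(\mathbf x)=\frac{1}{a_d|\mathbf x|^{d-1}}$ on $\mathbb B_d\setminus\{\mathbf 0\}$, $a_d=2\pi^{d/2}/\Gamma(d/2)$). $\psi$ is the convex lsc function on $\mathbb B_d$, normalized by $\psi(\mathbf 0)=0$, whose a.e. gradient pushes $\mathrm U_d$ forward to $\mathrm P$ (McCann), extended by $+\infty$ outside $\bar{\mathbb B}_d$, and $\varphi(\mathbf x)=\sup_{\mathbf u\in\mathbb B_d}(\langle\mathbf u,\mathbf x\rangle-\psi(\mathbf u))$, $\mathbf x\in\mathbb{R}^d$, a convex function with $\nabla\varphi\sharp\mathrm P=\mathrm U_d$. $\partial\varphi$ is the subdifferential. *)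

(* Defs.v *)
(* R^d is modelled as d.-tuple R, equipped
   with the library's product (= Borel) sigma-algebra on tuples. *)
From HB Require Import structures.
From mathcomp Require Import all_boot all_order all_algebra.
From mathcomp Require Import all_classical all_reals all_analysis.
Set Implicit Arguments. Unset Strict Implicit. Unset Printing Implicit Defensive.
Import Order.TTheory GRing.Theory Num.Theory.
Local Open Scope classical_set_scope.
Local Open Scope ring_scope.

Section Defs.
Variables (R : realType) (d : nat).
Notation V := (d.-tuple R).

Definition vadd (x y : V) : V := [tuple tnth x i + tnth y i | i < d].
Definition vsub (x y : V) : V := [tuple tnth x i - tnth y i | i < d].
Definition vscale (a : R) (x : V) : V := [tuple a * tnth x i | i < d].
Definition dotv (x y : V) : R := \sum_(i < d) tnth x i * tnth y i.
Definition normv (x : V) : R := Num.sqrt (dotv x x).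

Definition unit_ball : set V := [set x | normv x < 1].
Definition unit_sphere : set V := [set x | normv x = 1].

Definition convex_on_ball (psi : V -> R) : Prop :=
  forall x y, unit_ball x -> unit_ball y -> forall l : R, 0 <= l <= 1 ->
    psi (vadd (vscale l x) (vscale (1 - l) y)) <= l * psi x + (1 - l) * psi y.

Definition lsc_on_ball (psi : V -> R) : Prop :=
  forall x, unit_ball x -> forall e : R, 0 < e -> exists2 del : R, 0 < del &
    forall z, unit_ball z -> normv (vsub z x) < del -> psi x - e < psi z.

Definition has_gradient (psi : V -> R) (x g : V) : Prop :=
  forall e : R, 0 < e -> exists2 del : R, 0 < del &
    forall h, 0 < normv h < del ->
      `|psi (vadd x h) - psi x - dotv g h| <= e * normv h.

Definition Gamma (s : R) : R :=
  Rintegral lebesgue_measure `]0, +oo[ (fun x : R => x `^ (s - 1) * expR (- x)).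

(* a_d = 2 pi^(d/2) / Gamma(d/2), the surface area of S_{d-1} *)
Definition a_d : R := 2 * pi `^ (d%:R / 2) / Gamma (d%:R / 2).

(* density u_d of the spherical uniform U_d (zero outside B_d \ {0}) *)
Definition u_d (x : V) : R :=
  if (0 < normv x < 1)%R then (a_d * normv x ^+ d.-1)^-1 else 0.

Definition U_d (lam : set V -> \bar R) (A : set V) : \bar R :=
  (\int[lam]_(x in A) (u_d x)%:E)%E.

Definition is_lebesgue_measure (lam : {measure set V -> \bar R}) : Prop :=
  forall a b : V,
    lam [set x | forall i, tnth a i < tnth x i <= tnth b i] =
    (\prod_(i < d) Num.max (tnth b i - tnth a i) 0)%:E.

Definition has_lebesgue_density (lam : {measure set V -> \bar R})
    (P : probability V R) : Prop :=
  exists f : V -> R, [/\ measurable_fun setT f, (forall x, 0 <= f x) &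
    forall A, measurable A -> P A = (\int[lam]_(x in A) (f x)%:E)%E].

Definition gradient_pushes_forward (lam : {measure set V -> \bar R})
    (psi : V -> R) (P : probability V R) : Prop :=
  exists T : V -> V, [/\ measurable_fun setT T,
    (exists N : set V, [/\ measurable N, U_d lam N = 0%E &
        forall x, unit_ball x -> ~ N x -> has_gradient psi x (T x)]) &
    forall A, measurable A -> P A = U_d lam (T @^-1` A)].

Definition legendre_ball (psi : V -> R) (x : V) : \bar R :=
  ereal_sup [set ((dotv u x - psi u)%:E) | u in unit_ball].

Definition subdiff (f : V -> \bar R) (x : V) : set V :=
  [set y | f x \is a fin_num /\
           forall z, (f x + (dotv y (vsub z x))%:E <= f z)%E].

End Defs.

(* Main.v *)
Require Import Defs.
From HB Require Import structures.
From mathcomp Require Import all_boot all_order all_algebra.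
From mathcomp Require Import all_classical all_reals all_analysis.
From mathcomp Require Import ring lra.
Import Order.TTheory GRing.Theory Num.Theory.
Local Open Scope classical_set_scope.
Local Open Scope ring_scope.

Set Implicit Arguments. Unset Strict Implicit.
Section H.
Variables (R : realType) (d : nat).
Implicit Types x y z v w : d.-tuple R.

Lemma dot_addr x y z : dotv x (vadd y z) = dotv x y + dotv x z.
Proof.
rewrite /dotv -big_split /=; apply: eq_bigr => i _.
by rewrite tnth_mktuple mulrDr.
Qed.

Lemma dot_subr x y z : dotv x (vsub y z) = dotv x y - dotv x z.
Proof.
rewrite /dotv -sumrB /=; apply: eq_bigr => i _.
by rewrite tnth_mktuple mulrBr.
Qed.

Lemma dot_scaler x a y : dotv x (vscale a y) = a * dotv x y.
Proof.
rewrite /dotv mulr_sumr; apply: eq_bigr => i _.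
by rewrite tnth_mktuple mulrCA.
Qed.

Lemma dot_scalel x a y : dotv (vscale a y) x = a * dotv y x.
Proof.
rewrite /dotv mulr_sumr; apply: eq_bigr => i _.
by rewrite tnth_mktuple mulrA.
Qed.

Lemma dotC x y : dotv x y = dotv y x.
Proof. by rewrite /dotv; apply: eq_bigr => i _; rewrite mulrC. Qed.

Lemma dot0r x : dotv x [tuple of nseq d 0] = 0.
Proof. by rewrite /dotv big1 // => i _; rewrite tnth_nseq mulr0. Qed.

Lemma dot_ge0 x : 0 <= dotv x x.
Proof. by rewrite /dotv sumr_ge0 // => i _; rewrite -expr2 sqr_ge0. Qed.

Lemma dot_amgm x y : 2 * `|dotv x y| <= dotv x x + dotv y y.
Proof.
have H1 : 2 * dotv x y <= dotv x x + dotv y y.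
  rewrite /dotv mulr_sumr -big_split /=; apply: ler_sum => i _.
  set a := tnth x i; set b := tnth y i.
  have := sqr_ge0 (a - b); rewrite expr2 => h; nra.
have H2 : - (2 * dotv x y) <= dotv x x + dotv y y.
  rewrite /dotv mulr_sumr -sumrN -big_split /=; apply: ler_sum => i _.
  set a := tnth x i; set b := tnth y i.
  have := sqr_ge0 (a + b); rewrite expr2 => h; nra.
by case: (ler0P (dotv x y)) => h; lra.
Qed.

Lemma dot_sub_sub x y :
  dotv (vsub x y) (vsub x y) = dotv x x - 2 * dotv x y + dotv y y.
Proof.
rewrite /dotv mulr_sumr -sumrB -big_split /=; apply: eq_bigr => i _.
rewrite !tnth_mktuple; ring.
Qed.

Lemma normv_dot x : normv x ^+ 2 = dotv x x.
Proof. by rewrite /normv sqr_sqrtr // dot_ge0. Qed.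

Lemma ball_dot x : unit_ball x -> dotv x x < 1.
Proof.
rewrite /unit_ball /= => h; rewrite -normv_dot.
have h0 : 0 <= normv x by rewrite /normv sqrtr_ge0.
nra.
Qed.

Lemma dot_ball x : dotv x x < 1 -> unit_ball x.
Proof.
rewrite /unit_ball /= /normv => h.
by rewrite -sqrtr1 ltr_sqrt.
Qed.

Lemma dot_lt_norm x e : 0 < e -> dotv x x < e ^+ 2 -> normv x < e.
Proof.
move=> e0 h; rewrite /normv.
have -> : e = Num.sqrt (e ^+ 2) by rewrite sqrtr_sqr gtr0_norm.
by rewrite ltr_sqrt // exprn_gt0.
Qed.

End H.

Theorem proposition3p1 (R : realType) (d : nat)
    (lam : {measure set (d.-tuple R) -> \bar R})
    (P : probability (d.-tuple R) R) (psi : d.-tuple R -> R) :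
  is_lebesgue_measure lam ->
  has_lebesgue_density lam P ->
  convex_on_ball psi -> lsc_on_ball psi -> psi [tuple of nseq d 0] = 0 ->
  gradient_pushes_forward lam psi P ->
  forall (u : d.-tuple R), unit_sphere u ->
  forall (t : nat -> R), t @ \oo --> +oo ->
  forall (y : nat -> d.-tuple R),
    (forall n, subdiff (legendre_ball psi) (vscale (t n) u) (y n)) ->
  forall e : R, 0 < e -> exists N : nat, forall n, (N <= n)%N ->
    normv (vsub (y n) u) < e.
Proof.
move=> _ _ _ _ _ _ u hu t ht y hy e e0.
have uu : dotv u u = 1 by rewrite -normv_dot hu expr1n.
set F := legendre_ball psi.
have Fub : forall x v, unit_ball v -> ((dotv v x - psi v)%:E <= F x)%E.
  by move=> x v hv; apply: ereal_sup_ubound; exists v.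
have vu : forall v, unit_ball v -> `|dotv v u| <= 1.
  move=> v hv; have := dot_amgm v u; have := ball_dot hv; rewrite uu; lra.
pose a0 := fine (F (vscale (t 0%N) u)).
have Fa0 : F (vscale (t 0%N) u) = a0%:E by rewrite /a0 fineK //; case: (hy 0%N).
pose B := a0 + `|t 0%N|.
have F0 : (F [tuple of nseq d 0%R] <= B%:E)%E.
  apply: ge_ereal_sup => _ [v hv <-]; rewrite lee_fin dot0r.
  have := Fub (vscale (t 0%N) u) v hv; rewrite Fa0 lee_fin dot_scaler => h.
  have hc := vu v hv.
  rewrite /B.
  have : - (t 0%N * dotv v u) <= `|t 0%N|.
    rewrite -normrN -mulNr; apply: le_trans (ler_norm _) _.
    by rewrite normrM ler_piMr.
  lra.
pose e' := Num.min e 1.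
have e'0 : 0 < e' by rewrite lt_min e0 ltr01.
have e'1 : e' <= 1 by rewrite ge_min lexx orbT.
have e'e : e' <= e by rewrite ge_min lexx.
pose k := e' ^+ 2 / 8.
have k0 : 0 < k by rewrite /k divr_gt0 // exprn_gt0.
have k1 : k <= 1 / 8.
  rewrite /k ler_pM2r ?invr_gt0 //; have : e' * e' <= 1 by nra.
  by rewrite expr2.
pose s := 1 - k.
pose su := vscale s u.
have hsu : unit_ball su.
  apply: dot_ball; rewrite /su dot_scaler dot_scalel uu mulr1.
  have : 0 < s < 1 by rewrite /s; apply/andP; split; lra.
  nra.
pose C := B + psi su.
pose M := (`|C| + 1) / k.
have M0 : 0 < M by rewrite /M divr_gt0 // ltr_wpDl.
have [N _ HN] := proj1 (cvgryPge t) ht M.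
exists N => n /HN /= hM.
have [hfin hsub] := hy n; rewrite -/F in hfin hsub.
set x := vscale (t n) u.
set yn := y n.
pose a := fine (F x).
have Fa : F x = a%:E by rewrite /a fineK.
have yy : dotv yn yn <= 1.
  have := hsub (vadd x yn).
  have -> : dotv yn (vsub (vadd x yn) x) = dotv yn yn.
    rewrite dot_subr dot_addr; ring.
  move=> h.
  have h2 : (F (vadd x yn) <= (a + (1 + dotv yn yn) / 2)%:E)%E.
    apply: ge_ereal_sup => _ [v hv <-]; rewrite lee_fin dot_addr.
    have := Fub x v hv; rewrite Fa lee_fin => h3.
    have := dot_amgm v yn; have := ball_dot hv.
    have := ler_norm (dotv v yn). lra.
  have := le_trans h h2; rewrite Fa -EFinD lee_fin; lra.
have hz := hsub [tuple of nseq d 0%R].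
rewrite dot_subr dot0r /x dot_scaler -/x in hz.
have hz2 := le_trans hz F0; rewrite Fa -EFinD lee_fin in hz2.
have ha := Fub x su hsu; rewrite Fa lee_fin /x /su dot_scaler dot_scalel uu
  mulr1 -/su -/x in ha.
have hyu : s - k < dotv yn u.
  rewrite ltNge; apply/negP => hc.
  have hd : k <= s - dotv yn u by lra.
  have hMk : M * k = `|C| + 1 by rewrite /M mulfVK // gt_eqF.
  have tpos : 0 < t n by lra.
  have : t n * k <= t n * (s - dotv yn u) by rewrite ler_pM2l.
  have : M * k <= t n * k by rewrite ler_pM2r.
  have := ler_norm C.
  rewrite /C in hMk *; rewrite hMk; nra.
apply: (@Order.POrderTheory.lt_le_trans _ _ e'); last exact: e'e.
apply: dot_lt_norm => //.
rewrite dot_sub_sub uu -/yn.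
have ek : e' ^+ 2 = 8 * k by rewrite /k mulrC mulfVK.
rewrite ek.
have hyu' : 1 - 2 * k < dotv yn u by move: hyu; rewrite /s; lra.
clear -hyu' yy k0.
lra.
Qed.
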